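(* Let $n\ge2$, let $K$ be an oriented $(n-1)$-dimensional pseudo-manifold with vertex set $\mathbb{V}(K)$ and edge set $\mathbb{E}(K)$, and let $\boldsymbol{\ell}=(\ell_e)_{e\in\mathbb{E}(K)}$ be positive reals such that polyhedra of combinatorial type $K$ with edge lengths $\boldsymbol{\ell}$ have non-degenerate faces. Then for each $(n-2)$-dimensional face $F$ of $K$ there is a polynomial $Q_F$ in the coordinates $x_{v,j}$ such that $\exp(i\alpha_F(P))=Q_F(P)$ for all $P\in\Sigma^+(\boldsymbol{\ell})$.
   Context: $\Lambda^n=\{\mathbf{x}\in\mathbb{R}^{1,n}:\langle\mathbf{x},\mathbf{x}\rangle=1,x_0>0\}$, $\langle\mathbf{x},\mathbf{y}\rangle=x_0y_0-\sum_{j\ge1}x_jy_j$. A polyhedron of combinatorial type $K$ is a map $P\colon K\to\Lambda^n$ pseudo-linear on each simplex ($P(\sum\beta_jv_j)=\sum\beta_jP(v_j)/|\sum\beta_jP(v_j)|$); it is determined by the vectors $\mathbf{x}_v=P(v)$, $v\in\mathbb{V}(K)$, with coordinates $x_{v,0},\dots,x_{v,n}$, so it is a point of $\mathbb{R}^{m(n+1)}$, $m=|\mathbb{V}(K)|$. $\Sigma^+(\boldsymbol{\ell})\subset\mathbb{R}^{m(n+1)}$ is given by $\langle\mathbf{x}_v,\mathbf{x}_v\rangle=1$, $x_{v,0}>0$ for all $v$, and $\langle\mathbf{x}_u,\mathbf{x}_v\rangle=\cosh\ell_{[uv]}$ for all edges $[uv]$. Non-degenerate faces: every simplex of $K$ maps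 to a non-degenerate simplex of the same dimension. Oriented dihedral angle $\alpha_F(P)\in\mathbb{R}/2\pi\mathbb{Z}$ at an $(n-2)$-face $F$ contained in the $(n-1)$-simplices $\sigma_1,\sigma_2$: at $\mathbf{x}\in P(F)$ let $\mathbf{n}_i\in T_{\mathbf{x}}P(\sigma_i)$ be the unit vectors orthogonal to $T_{\mathbf{x}}P(F)$ pointing into $P(\sigma_i)$, and $\mathbf{m}_1$ the unit normal to $P(\sigma_1)$ such that the direction of $\mathbf{m}_1$ followed by the positive orientation of $P(\sigma_1)$ gives the positive orientation of $\Lambda^n$; with rotation from $\mathbf{m}_1$ to $\mathbf{n}_1$ positive, $\alpha_F$ is the angle from $\mathbf{n}_1$ to $\mathbf{n}_2$. *)

(* Defs.v *)
From HB Require Import structures.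
From mathcomp Require Import all_boot all_order all_algebra.
From mathcomp Require Import all_classical all_reals all_analysis.
From mathcomp Require Import complex.
From mathcomp Require mpoly.
Set Implicit Arguments. Unset Strict Implicit. Unset Printing Implicit Defensive.
Import Order.TTheory GRing.Theory Num.Theory.
Local Open Scope ring_scope.

(* facets = (n-1)-simplices, i.e. simplices with n vertices *)
Definition is_facet (m n : nat) (K : {set {set 'I_m}}) (s : {set 'I_m}) : bool :=
  (s \in K) && (#|s| == n).

Definition facet_adj (m n : nat) (K : {set {set 'I_m}}) : rel {set 'I_m} :=
  [rel s t | [&& is_facet n K s, is_facet n K t & #|s :&: t| == n.-1]].

(* K is an abstract simplicial complex with vertex set 'I_m which is an
   (n-1)-dimensional pseudo-manifold: pure, non-branching, strongly connected *)
Definition pseudo_manifold (m n : nat) (K : {set {set 'I_m}}) : Prop :=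
  (forall s : {set 'I_m}, s \in K -> (0 < #|s|)%N) /\
  [/\ (forall s t : {set 'I_m}, s \in K -> t \subset s -> (0 < #|t|)%N -> t \in K),
      (forall v : 'I_m, [set v] \in K),
      (forall s : {set 'I_m}, s \in K -> exists2 f, is_facet n K f & s \subset f),
      (forall F : {set 'I_m}, F \in K -> #|F| = n.-1 ->
          #|[set f | is_facet n K f && (F \subset f)]| = 2)
    & (forall f g : {set 'I_m}, is_facet n K f -> is_facet n K g -> connect (facet_adj n K) f g)].

(* An orientation: o f = false means the positive orientation of the facet f is
   the increasing ordering of its vertices, o f = true the opposite one.
   The orientation induced on an (n-2)-face F of f = F + {w} is
   (-1)^(o f + k) times the increasing ordering of F, where k is the position
   of w in the increasing ordering of f.  Oriented = the two orientations
   induced on every (n-2)-face are opposite. *)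
Definition oriented_pseudo_manifold (m n : nat) (K : {set {set 'I_m}})
    (o : {set 'I_m} -> bool) : Prop :=
  pseudo_manifold n K /\
  forall (F f g : {set 'I_m}) (wf wg : 'I_m), F \in K -> #|F| = n.-1 ->
    is_facet n K f -> is_facet n K g -> f != g -> F \subset f -> F \subset g ->
    wf \in f :\: F -> wg \in g :\: F ->
    odd (o f + #|[set u in F | (u < wf)%N]| + o g + #|[set u in F | (u < wg)%N]|).

Definition mink (R : realType) (n : nat) (u v : 'rV[R]_n.+1) : R :=
  u 0 0 * v 0 0 - \sum_(j < n.+1 | j != ord0) u 0 j * v 0 j.

Definition cosh_ (R : realType) (x : R) : R := (expR x + expR (- x)) / 2.

(* A polyhedron of type K is given by the matrix X whose row v is x_v = P(v). *)
Definition in_Sigma_plus (R : realType) (m n : nat) (K : {set {set 'I_m}})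
    (ell : {set 'I_m} -> R) (X : 'M[R]_(m, n.+1)) : Prop :=
  (forall v : 'I_m, mink (row v X) (row v X) = 1 /\ 0 < X v 0) /\
  (forall u v : 'I_m, u != v -> [set u; v] \in K ->
       mink (row u X) (row v X) = cosh_ (ell [set u; v])).

(* non-degenerate faces: every simplex of K goes to a non-degenerate simplex of
   the same dimension, i.e. the x_v, v in s, are linearly independent *)
Definition nondegenerate_faces (R : realType) (m n : nat) (K : {set {set 'I_m}})
    (X : 'M[R]_(m, n.+1)) : Prop :=
  forall s : {set 'I_m}, s \in K -> forall c : 'I_m -> R,
    \sum_(v in s) c v *: row v X = 0 -> forall v, v \in s -> c v = 0.

Definition span_of (R : realType) (m n : nat) (X : 'M[R]_(m, n.+1))
    (s : {set 'I_m}) (u : 'rV[R]_n.+1) : Prop :=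
  exists c : 'I_m -> R, u = \sum_(v in s) c v *: row v X.

Definition in_cone (R : realType) (m n : nat) (X : 'M[R]_(m, n.+1))
    (s : {set 'I_m}) (u : 'rV[R]_n.+1) : Prop :=
  exists c : 'I_m -> R, (forall v, 0 <= c v) /\ u = \sum_(v in s) c v *: row v X.

(* x is a point of the relative interior of P(F) (pseudo-linear image of a
   point of the open simplex F) *)
Definition interior_point (R : realType) (m n : nat) (X : 'M[R]_(m, n.+1))
    (F : {set 'I_m}) (x : 'rV[R]_n.+1) : Prop :=
  exists beta : 'I_m -> R, [/\ (forall v, v \in F -> 0 < beta v),
     \sum_(v in F) beta v = 1 &
     x = (Num.sqrt (mink (\sum_(v in F) beta v *: row v X)
                         (\sum_(v in F) beta v *: row v X)))^-1
           *: \sum_(v in F) beta v *: row v X].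

(* nv is the unit vector of T_x P(f) orthogonal to T_x P(F) pointing into P(f).
   T_x Lambda^n = x^perp (Minkowski), with Riemannian metric -mink;
   T_x P(s) = span{x_v : v in s} /\ x^perp. *)
Definition inward_normal (R : realType) (m n : nat) (X : 'M[R]_(m, n.+1))
    (F f : {set 'I_m}) (x nv : 'rV[R]_n.+1) : Prop :=
  [/\ span_of X f nv, mink nv x = 0,
      (forall u, span_of X F u -> mink u x = 0 -> mink nv u = 0),
      mink nv nv = -1
    & exists2 eps : R, 0 < eps &
        forall t : R, 0 < t -> t < eps -> in_cone X f (x + t *: nv)].

(* tangential projection onto x^perp (for mink x x = 1) *)
Definition proj_tan (R : realType) (n : nat) (x u : 'rV[R]_n.+1) : 'rV[R]_n.+1 :=
  u - mink u x *: x.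

Definition fvert (R : realType) (m n : nat) (X : 'M[R]_(m, n.+1))
    (f : {set 'I_m}) (k : nat) : 'rV[R]_n.+1 :=
  nth 0 [seq row v X | v <- enum f] k.

(* rows: x, mv, then the image under the differential of the pseudo-linear map
   of the frame (v_1 - v_0, ..., v_{n-1} - v_0) of the facet f (increasing
   vertex order), up to positive factors *)
Definition orient_frame (R : realType) (m n : nat) (X : 'M[R]_(m, n.+1))
    (f : {set 'I_m}) (x mv : 'rV[R]_n.+1) : 'M[R]_(n.+1) :=
  \matrix_(i < n.+1)
    (if (i : nat) == 0%N then x
     else if (i : nat) == 1%N then mv
     else proj_tan x (fvert X f i.-1 - fvert X f 0)).

(* mv is the unit normal to P(f) at x such that (mv, positive frame of P(f))
   is a positive frame of Lambda^n.  Convention: a basis (b_1,..,b_n) of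
   T_x Lambda^n is positive iff det(x, b_1, ..., b_n) > 0. *)
Definition oriented_normal (R : realType) (m n : nat) (X : 'M[R]_(m, n.+1))
    (o : {set 'I_m} -> bool) (f : {set 'I_m}) (x mv : 'rV[R]_n.+1) : Prop :=
  [/\ mink mv x = 0,
      (forall u, span_of X f u -> mink u x = 0 -> mink mv u = 0),
      mink mv mv = -1
    & 0 < (-1) ^+ o f * \det (orient_frame X f x mv)].

(* alpha is (a representative of) the oriented dihedral angle alpha_F(P) at
   the (n-2)-face F between the facets f1, f2, computed at the point x of P(F):
   the angle from n1 to n2 in the plane where the rotation from m1 to n1 is
   positive, i.e. n2 = cos alpha n1 + sin alpha J n1 with J n1 = - m1. *)
Definition is_oriented_dihedral_angle (R : realType) (m n : nat)
    (X : 'M[R]_(m, n.+1)) (o : {set 'I_m} -> bool) (F f1 f2 : {set 'I_m})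
    (x : 'rV[R]_n.+1) (alpha : R) : Prop :=
  exists n1 n2 m1 : 'rV[R]_n.+1,
    [/\ inward_normal X F f1 x n1, inward_normal X F f2 x n2,
        oriented_normal X o f1 x m1
      & n2 = cos alpha *: n1 - sin alpha *: m1].

Definition coords (R : realType) (m n : nat) (X : 'M[R]_(m, n.+1)) :
    'I_(m * n.+1) -> R[i] :=
  fun k => Complex (mxvec X 0 k) 0.

(* Main.v *)
Require Import Defs.
From HB Require Import structures.
From mathcomp Require Import all_boot all_order all_algebra.
From mathcomp Require Import all_classical all_reals all_analysis.
From mathcomp Require Import complex.
From mathcomp Require mpoly.
From mathcomp Require Import all_fingroup.
From mathcomp Require Import ring lra zify.
Set Implicit Arguments. Unset Strict Implicit. Unset Printing Implicit Defensive.
Import Order.TTheory GRing.Theory Num.Theory.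
Local Open Scope ring_scope.
Canonical mpoly.mpoly_mpoly__canonical__Algebra_AddMagma.
Canonical mpoly.mpoly_mpoly__canonical__Algebra_AddSemigroup.
Canonical mpoly.mpoly_mpoly__canonical__Algebra_AddUMagma.
Canonical mpoly.mpoly_mpoly__canonical__Algebra_BaseAddMagma.
Canonical mpoly.mpoly_mpoly__canonical__Algebra_BaseAddUMagma.
Canonical mpoly.mpoly_mpoly__canonical__Algebra_BaseZmodule.
Canonical mpoly.mpoly_mpoly__canonical__Algebra_ChoiceBaseAddMagma.
Canonical mpoly.mpoly_mpoly__canonical__Algebra_ChoiceBaseAddUMagma.
Canonical mpoly.mpoly_mpoly__canonical__Algebra_Nmodule.
Canonical mpoly.mpoly_mpoly__canonical__Algebra_Zmodule.
Canonical mpoly.mpoly_mpoly__canonical__GRing_Algebra.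
Canonical mpoly.mpoly_mpoly__canonical__GRing_ComAlgebra.
Canonical mpoly.mpoly_mpoly__canonical__GRing_ComNzRing.
Canonical mpoly.mpoly_mpoly__canonical__GRing_ComNzSemiRing.
Canonical mpoly.mpoly_mpoly__canonical__GRing_ComPzRing.
Canonical mpoly.mpoly_mpoly__canonical__GRing_ComPzSemiRing.
Canonical mpoly.mpoly_mpoly__canonical__GRing_ComSemiAlgebra.
Canonical mpoly.mpoly_mpoly__canonical__GRing_ComUnitAlgebra.
Canonical mpoly.mpoly_mpoly__canonical__GRing_ComUnitRing.
Canonical mpoly.mpoly_mpoly__canonical__GRing_IntegralDomain.
Canonical mpoly.mpoly_mpoly__canonical__GRing_LSemiAlgebra.
Canonical mpoly.mpoly_mpoly__canonical__GRing_LSemiModule.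
Canonical mpoly.mpoly_mpoly__canonical__GRing_Lalgebra.
Canonical mpoly.mpoly_mpoly__canonical__GRing_Lmodule.
Canonical mpoly.mpoly_mpoly__canonical__GRing_NzRing.
Canonical mpoly.mpoly_mpoly__canonical__GRing_NzSemiRing.
Canonical mpoly.mpoly_mpoly__canonical__GRing_PzRing.
Canonical mpoly.mpoly_mpoly__canonical__GRing_PzSemiRing.
Canonical mpoly.mpoly_mpoly__canonical__GRing_SemiAlgebra.
Canonical mpoly.mpoly_mpoly__canonical__GRing_UnitAlgebra.
Canonical mpoly.mpoly_mpoly__canonical__GRing_UnitRing.
Canonical mpoly.mpoly_mpoly__canonical__choice_Choice.
Canonical mpoly.mpoly_mpoly__canonical__choice_SubChoice.
Canonical mpoly.mpoly_mpoly__canonical__eqtype_Equality.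
Canonical mpoly.mpoly_mpoly__canonical__eqtype_SubEquality.
Canonical mpoly.mpoly_mpoly__canonical__eqtype_SubType.
Section Mink.
Variable R : realType.
Variable n : nat.
Implicit Types u v w : 'rV[R]_n.+1.

Definition eta (j : 'I_n.+1) : R := if j == ord0 then 1 else -1.

Lemma minkE u v : mink u v = \sum_j eta j * (u 0 j * v 0 j).
Proof.
rewrite /mink [RHS](bigD1 ord0) //= /eta eqxx mul1r.
rewrite -sumrN; congr (_ + _); apply: eq_bigr => j /negPf ->.
by rewrite mulN1r.
Qed.

Lemma minkC u v : mink u v = mink v u.
Proof. by rewrite !minkE; apply: eq_bigr => j _; rewrite (mulrC (u 0 j)). Qed.

Lemma minkDl u v w : mink (u + v) w = mink u w + mink v w.
Proof. rewrite !minkE -big_split; apply: eq_bigr => j _; rewrite !mxE /=. ring. Qed.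

Lemma minkZl a u w : mink (a *: u) w = a * mink u w.
Proof. by rewrite !minkE mulr_sumr; apply: eq_bigr => j _; rewrite !mxE; ring. Qed.

Lemma mink0l w : mink 0 w = 0.
Proof. by rewrite minkE big1 // => j _; rewrite mxE; ring. Qed.

Lemma minkNl u w : mink (- u) w = - mink u w.
Proof. by rewrite -scaleN1r minkZl mulN1r. Qed.

Lemma minkBl u v w : mink (u - v) w = mink u w - mink v w.
Proof. by rewrite minkDl minkNl. Qed.

Lemma minkDr u v w : mink w (u + v) = mink w u + mink w v.
Proof. by rewrite !(minkC w) minkDl. Qed.
Lemma minkZr a u w : mink w (a *: u) = a * mink w u.
Proof. by rewrite !(minkC w) minkZl. Qed.
Lemma minkBr u v w : mink w (u - v) = mink w u - mink w v.
Proof. by rewrite !(minkC w) minkBl. Qed.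
Lemma mink0r w : mink w 0 = 0.
Proof. by rewrite minkC mink0l. Qed.

Lemma mink_suml (I : Type) (r : seq I) (P : pred I) (F : I -> 'rV[R]_n.+1) w :
  mink (\sum_(i <- r | P i) F i) w = \sum_(i <- r | P i) mink (F i) w.
Proof.
elim: r => [|a r IH]; first by rewrite !big_nil mink0l.
by rewrite !big_cons; case: (P a); rewrite ?minkDl IH.
Qed.

Lemma mink_sumr (I : Type) (r : seq I) (P : pred I) (F : I -> 'rV[R]_n.+1) w :
  mink w (\sum_(i <- r | P i) F i) = \sum_(i <- r | P i) mink w (F i).
Proof. by rewrite minkC mink_suml; apply: eq_bigr => i _; rewrite minkC. Qed.

Definition Eta : 'M[R]_n.+1 := diag_mx (\row_j eta j).

Lemma GramE (N : nat) (A B : 'M[R]_(N, n.+1)) i j :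
  (A *m Eta *m B^T) i j = mink (row i A) (row j B).
Proof.
rewrite minkE !mxE; apply: eq_bigr => k _.
rewrite !mxE (bigD1 k) //= big1 ?addr0; last first.
  by move=> l /negPf nlk; rewrite /Eta !mxE nlk mulr0n mulr0.
by rewrite /Eta !mxE eqxx mulr1n; ring.
Qed.

Lemma det_Eta : \det Eta = (-1) ^+ n.
Proof.
rewrite det_diag big_ord_recl !mxE /eta eqxx mul1r.
rewrite (eq_bigr (fun _ => -1)) ?prodr_const ?card_ord // => i _.
by rewrite mxE.
Qed.

Lemma det_Eta_neq0 : \det Eta != 0.
Proof. by rewrite det_Eta signr_eq0. Qed.

Lemma det_Gram (A : 'M[R]_n.+1) : \det (A *m Eta *m A^T) = \det A ^+ 2 * \det Eta.
Proof. by rewrite !det_mulmx det_tr; ring. Qed.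

Lemma timelike0 (x z : 'rV[R]_n.+1) : mink x x = 1 -> mink z x = 0 -> mink z z = 0 -> z = 0.
Proof.
move=> hx hzx hzz.
have e1 : x 0 0 ^+ 2 = 1 + \sum_(j < n.+1 | j != ord0) x 0 j ^+ 2.
  rewrite (eq_bigr (fun j => x 0 j * x 0 j)) => [|j _]; last by rewrite expr2.
  move: hx; rewrite /mink expr2; lra.
have e2 : z 0 0 ^+ 2 = \sum_(j < n.+1 | j != ord0) z 0 j ^+ 2.
  rewrite (eq_bigr (fun j => z 0 j * z 0 j)) => [|j _]; last by rewrite expr2.
  move: hzz; rewrite /mink expr2; lra.
have e3 : z 0 0 * x 0 0 = \sum_(j < n.+1 | j != ord0) z 0 j * x 0 j.
  move: hzx; rewrite /mink; lra.
have key : \sum_(j < n.+1 | j != ord0) (z 0 j * x 0 0 - x 0 j * z 0 0) ^+ 2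
           = - z 0 0 ^+ 2.
  have -> : \sum_(j < n.+1 | j != ord0) (z 0 j * x 0 0 - x 0 j * z 0 0) ^+ 2 =
     x 0 0 ^+ 2 * \sum_(j < n.+1 | j != ord0) z 0 j ^+ 2
     - 2 * (x 0 0 * z 0 0) * \sum_(j < n.+1 | j != ord0) z 0 j * x 0 j
     + z 0 0 ^+ 2 * \sum_(j < n.+1 | j != ord0) x 0 j ^+ 2.
    rewrite !mulr_sumr -sumrB -big_split /=; apply: eq_bigr => j _; ring.
  rewrite -e2 -e3.
  have -> : \sum_(j < n.+1 | j != ord0) x 0 j ^+ 2 = x 0 0 ^+ 2 - 1 by rewrite e1; ring.
  ring.
have z00 : z 0 0 = 0.
  have : 0 <= - z 0 0 ^+ 2 by rewrite -key; apply: sumr_ge0 => j _; exact: sqr_ge0.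
  rewrite oppr_ge0 => h; apply/eqP; rewrite -sqrf_eq0 eq_le h sqr_ge0 //.
apply/rowP => j; rewrite mxE.
have [->|jn0] := eqVneq j ord0; first by rewrite z00.
move: e2; rewrite z00 expr0n /= => /esym /eqP; rewrite psumr_eq0; last first.
  by move=> i _; exact: sqr_ge0.
by move=> /allP /(_ j (mem_index_enum _)); rewrite jn0 /= sqrf_eq0 => /eqP.
Qed.

End Mink.
Section DetTools.
Variable R : realType.

Lemma row_mulmx_sum N M P (T : 'M[R]_(N, M)) (B : 'M[R]_(M, P)) i :
  row i (T *m B) = \sum_k T i k *: row k B.
Proof.
rewrite row_mul mulmx_sum_row; apply: eq_bigr => k _; by rewrite mxE.
Qed.

Lemma det_unit_lower N (T : 'M[R]_N) :
  (forall i j : 'I_N, (i < j)%N -> T i j = 0) -> (forall i, T i i = 1) -> \det T = 1.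
Proof.
move=> h0 h1; rewrite det_trig; last by apply/is_trig_mxP.
by rewrite big1 // => i _; exact: h1.
Qed.

Lemma det_unit_upper N (T : 'M[R]_N) :
  (forall i j : 'I_N, (j < i)%N -> T i j = 0) -> (forall i, T i i = 1) -> \det T = 1.
Proof.
move=> h0 h1; rewrite -det_tr; apply: det_unit_lower => [i j lij|i]; rewrite mxE.
  exact: h0.
exact: h1.
Qed.

Lemma det_xrow N (A : 'M[R]_N) i1 i2 : i1 != i2 -> \det (xrow i1 i2 A) = - \det A.
Proof.
move=> ne; rewrite xrowE det_mulmx /tperm_mx det_perm odd_tperm ne expr1 mulN1r.
by [].
Qed.

Variable n : nat.

Definition mat (l : seq 'rV[R]_n.+1) : 'M[R]_n.+1 := \matrix_(i, j) (nth 0 l i) 0 j.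

Lemma row_mat l i : row i (mat l) = nth 0 l i.
Proof. by apply/rowP => j; rewrite !mxE. Qed.

Lemma mat_multilinear (l1 l2 : seq 'rV[R]_n.+1) b1 b2 s t :
  (size l1 < n.+1)%N ->
  \det (mat (l1 ++ (s *: b1 + t *: b2) :: l2)) =
  s * \det (mat (l1 ++ b1 :: l2)) + t * \det (mat (l1 ++ b2 :: l2)).
Proof.
move=> hs; apply: (determinant_multilinear (i0 := inord (size l1))).
- by rewrite !row_mat inordK // !nth_cat ltnn subnn.
- apply/matrixP => i j; rewrite !mxE; congr ((_ : 'rV_n.+1) 0 j).
  have : (lift (inord (size l1)) i : nat) != size l1.
    by have := neq_lift (inord (size l1) : 'I_n.+1) i; rewrite eq_sym -(inj_eq val_inj) /= inordK.
  move: (lift _ i : nat) => k hk; rewrite !nth_cat; case: ltnP => // hk2.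
  have : (0 < k - size l1)%N by rewrite subn_gt0 ltn_neqAle eq_sym hk hk2.
  by case: (k - size l1)%N.
- apply/matrixP => i j; rewrite !mxE; congr ((_ : 'rV_n.+1) 0 j).
  have : (lift (inord (size l1)) i : nat) != size l1.
    by have := neq_lift (inord (size l1) : 'I_n.+1) i; rewrite eq_sym -(inj_eq val_inj) /= inordK.
  move: (lift _ i : nat) => k hk; rewrite !nth_cat; case: ltnP => // hk2.
  have : (0 < k - size l1)%N by rewrite subn_gt0 ltn_neqAle eq_sym hk hk2.
  by case: (k - size l1)%N.
Qed.

Lemma mat_alternate (l : seq 'rV[R]_n.+1) (i j : nat) :
  (i < n.+1)%N -> (j < n.+1)%N -> i != j -> nth 0 l i = nth 0 l j -> \det (mat l) = 0.
Proof.
move=> hi hj ne e; apply: (determinant_alternate (i1 := inord i) (i2 := inord j)).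
  by rewrite -(inj_eq val_inj) /= !inordK.
by move=> k; rewrite !mxE !inordK // e.
Qed.

Lemma mat_swap (l1 l2 : seq 'rV[R]_n.+1) a b c :
  (size l1 + 2 < n.+1)%N ->
  \det (mat (a :: l1 ++ c :: b :: l2)) = - \det (mat (a :: l1 ++ b :: c :: l2)).
Proof.
move=> hs.
pose i1 : 'I_n.+1 := inord (size l1).+1; pose i2 : 'I_n.+1 := inord (size l1).+2.
have v1 : (i1 : nat) = (size l1).+1 by rewrite inordK // (leq_trans _ hs) // addn2.
have v2 : (i2 : nat) = (size l1).+2 by rewrite inordK // -addn2.
have ne : i1 != i2 by rewrite -(inj_eq val_inj) /= v1 v2 (ltn_eqF (ltnSn _)).
rewrite -(det_xrow _ ne); congr (\det _); apply/matrixP => i j.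
rewrite /xrow !mxE; congr ((_ : 'rV_n.+1) 0 j).
case: tpermP => [->|->|/eqP h1 /eqP h2].
- by rewrite v1 v2 /= !nth_cat ltnn subnn ltnNge leqnSn /= subSn // subnn.
- by rewrite v1 v2 /= !nth_cat ltnn subnn ltnNge leqnSn /= subSn // subnn.
- case: i h1 h2 => [[|k] hk] //= h1 h2.
  rewrite !nth_cat; case: ltnP => // hk2.
  have h1' : k != size l1 by apply: contra h1 => /eqP e; rewrite -(inj_eq val_inj) /= v1 e.
  have h2' : k != (size l1).+1 by apply: contra h2 => /eqP e; rewrite -(inj_eq val_inj) /= v2 e.
  case e: (k - size l1)%N => [|[|k']] //=.
  + by move/eqP: e; rewrite subn_eq0 => e; move: h1'; rewrite eqn_leq e hk2.
  + have ek : k = (size l1).+1 by rewrite -(subnK hk2) e.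
    by move: h2'; rewrite ek eqxx.
Qed.

Lemma mat_insert (l1 l2 : seq 'rV[R]_n.+1) a b :
  (size l1 + size l2).+2 = n.+1 ->
  \det (mat (a :: l1 ++ b :: l2)) = (-1) ^+ size l1 * \det (mat (a :: b :: l1 ++ l2)).
Proof.
elim/last_ind: l1 l2 => [|l1 c IH] l2 hs; first by rewrite expr0 mul1r.
rewrite -cats1 -catA /= mat_swap; last by move: hs; rewrite ?size_cat ?size_rcons /=; lia.
rewrite IH; last by move: hs; rewrite ?size_cat ?size_rcons /=; lia.
by rewrite size_cat /= addn1 exprS -catA /=; ring.
Qed.

End DetTools.
Section PolyFun.
Variable R : realType.
Variables m n : nat.

Definition PolyFun (g : 'M[R]_(m, n.+1) -> R) : Prop :=
  exists q : mpoly.mpoly (m * n.+1) R[i],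
    forall X, mpoly.meval (coords X) q = real_complex R (g X).

Lemma pf_ext g h : PolyFun g -> (forall X, g X = h X) -> PolyFun h.
Proof. by move=> [q hq] e; exists q => X; rewrite hq e. Qed.

Lemma pf_const c : PolyFun (fun _ => c).
Proof. by exists (mpoly.mpolyC _ (real_complex R c)) => X; rewrite mpoly.mevalC. Qed.

Lemma pf_coord v j : PolyFun (fun X => X v j).
Proof.
exists (mpoly.mpolyX _ (mpoly.mnm1 (mxvec_index v j))) => X.
by rewrite mpoly.mevalXU /coords mxvecE.
Qed.

Lemma pf_add g h : PolyFun g -> PolyFun h -> PolyFun (fun X => g X + h X).
Proof. by move=> [q hq] [r hr]; exists (q + r) => X; rewrite mpoly.mevalD hq hr rmorphD. Qed.

Lemma pf_mul g h : PolyFun g -> PolyFun h -> PolyFun (fun X => g X * h X).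
Proof. by move=> [q hq] [r hr]; exists (q * r) => X; rewrite mpoly.mevalM hq hr rmorphM. Qed.

Lemma pf_opp g : PolyFun g -> PolyFun (fun X => - g X).
Proof. by move=> [q hq]; exists (- q) => X; rewrite mpoly.mevalN hq rmorphN. Qed.

Lemma pf_sum (I : Type) (r : seq I) (P : pred I) (F : I -> 'M[R]_(m, n.+1) -> R) :
  (forall i, PolyFun (F i)) -> PolyFun (fun X => \sum_(i <- r | P i) F i X).
Proof.
move=> hF; elim: r => [|a r IH].
  by apply: pf_ext (pf_const 0) _ => X; rewrite big_nil.
case hP: (P a).
  by apply: pf_ext (pf_add (hF a) IH) _ => X; rewrite big_cons hP.
by apply: pf_ext IH _ => X; rewrite big_cons hP.
Qed.

Lemma pf_prod (I : Type) (r : seq I) (P : pred I) (F : I -> 'M[R]_(m, n.+1) -> R) :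
  (forall i, PolyFun (F i)) -> PolyFun (fun X => \prod_(i <- r | P i) F i X).
Proof.
move=> hF; elim: r => [|a r IH].
  by apply: pf_ext (pf_const 1) _ => X; rewrite big_nil.
case hP: (P a).
  by apply: pf_ext (pf_mul (hF a) IH) _ => X; rewrite big_cons hP.
by apply: pf_ext IH _ => X; rewrite big_cons hP.
Qed.

Lemma pf_det k (A : 'M[R]_(m, n.+1) -> 'M[R]_k) :
  (forall i j, PolyFun (fun X => A X i j)) -> PolyFun (fun X => \det (A X)).
Proof.
move=> hA; rewrite /determinant.
apply: pf_sum => s; apply: pf_mul; first exact: pf_const.
by apply: pf_prod => i; exact: hA.
Qed.

End PolyFun.
Section OrientAlg.
Variable R : realType.

Lemma sum_pick N (V : lmodType R) (i : 'I_N) (a : 'I_N -> R) (F : 'I_N -> V) :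
  (forall k, k != i -> a k = 0) -> \sum_k a k *: F k = a i *: F i.
Proof.
move=> h; rewrite (bigD1 i) //= big1 ?addr0 // => k hk; by rewrite h // scale0r.
Qed.

Variable n : nat.

Lemma rowK' N (E : 'I_N -> 'rV[R]_n.+1) i : row i (\matrix_(i0 < N) E i0) = E i.
Proof. by apply/rowP => j; rewrite !mxE. Qed.

Hypothesis n_gt0 : (0 < n)%N.

Definition o1 : 'I_n.+1 := inord 1.
Lemma o1E : (o1 : nat) = 1%N.
Proof. by rewrite /o1 inordK. Qed.

Lemma orient_det (x M : 'rV[R]_n.+1) (v : nat -> 'rV[R]_n.+1) (d : nat -> R) :
  x = \sum_(j < n) d j *: v j ->
  \det (\matrix_(i < n.+1) (if (i : nat) == 0%N then x else if (i : nat) == 1%N then M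
                           else proj_tan x (v i.-1 - v 0))) =
  - (\sum_(j < n) d j) * \det (\matrix_(i < n.+1) (if (i : nat) == 0%N then M else v i.-1)).
Proof.
move=> hx; set S := \sum_(j < n) d j.
set O := \matrix_(i < n.+1) _.
pose B := \matrix_(i < n.+1) (if (i : nat) == 0%N then x else if (i : nat) == 1%N then M
                           else v i.-1 - v 0).
have e1 : \det O = \det B.
  pose T : 'M[R]_n.+1 := \matrix_(i, k) ((i == k)%:R -
           ((2 <= i)%N && (k == ord0))%:R * mink (v (i : nat).-1 - v 0) x).
  have -> : O = T *m B.
    apply/row_matrixP => i; rewrite row_mulmx_sum.
    rewrite (eq_bigr (fun k => (i == k)%:R *: row k B -
        (((2 <= i)%N && (k == ord0))%:R * mink (v (i : nat).-1 - v 0) x) *: row k B));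
      last by move=> k _; rewrite mxE scalerBl.
    rewrite sumrB (@sum_pick _ _ i); last by move=> k /negPf; rewrite eq_sym => ->.
    rewrite (@sum_pick _ _ ord0); last by move=> k /negPf ->; rewrite andbF mul0r.
    rewrite eqxx mulr1n scale1r andbT /O /B !rowK'.
    case: i => [[|[|i]] hi] //=; rewrite ?mul0r ?scale0r ?subr0 //.
    by rewrite mul1r /proj_tan.
  rewrite det_mulmx (@det_unit_lower _ _ T) ?mul1r // => [i j hij|i]; rewrite mxE.
    by rewrite -(inj_eq val_inj) /= (ltn_eqF hij) -[j == ord0](inj_eq val_inj) /= eqn0Ngt (leq_ltn_trans (leq0n i) hij) andbF mul0r subr0.
  by rewrite eqxx; case: eqVneq => [->|_] /=; rewrite ?andbF ?mul0r ?subr0.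
pose B' := \matrix_(i < n.+1) (if (i : nat) == 0%N then S *: v 0 else if (i : nat) == 1%N then M
                           else v i.-1 - v 0).
have e2 : \det B = \det B'.
  pose U : 'M[R]_n.+1 := \matrix_(i, k) ((i == k)%:R +
           ((i == ord0) && (2 <= k)%N)%:R * d (k : nat).-1).
  have -> : B = U *m B'.
    apply/row_matrixP => i; rewrite row_mulmx_sum.
    rewrite (eq_bigr (fun k => (i == k)%:R *: row k B' +
        (((i == ord0) && (2 <= k)%N)%:R * d (k : nat).-1) *: row k B'));
      last by move=> k _; rewrite mxE scalerDl.
    rewrite big_split /= (@sum_pick _ _ i); last by move=> k /negPf; rewrite eq_sym => ->.
    rewrite eqxx scale1r.
    have [->|ni0] := eqVneq i ord0; last first.
      rewrite big1 ?addr0; last by move=> k _; rewrite mul0r scale0r.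
      by rewrite !rowK'; rewrite -(inj_eq val_inj) /= in ni0; rewrite (negPf ni0).
    rewrite !rowK' /= big_ord_recl /= mul0r scale0r add0r.
    rewrite (eq_bigr (fun j : 'I_n => (d j) *: (v j - v 0))); last first.
      move=> j _; rewrite rowK' lift0 /=; case: j => [[|j] hj] /=.
        by rewrite subrr scaler0 mul0r scale0r.
      by rewrite mul1r.
    rewrite (eq_bigr (fun j : 'I_n => d j *: v j - d j *: v 0)); last by move=> j _; rewrite scalerBr.
    by rewrite sumrB -scaler_suml -/S -hx addrC subrK.
  rewrite det_mulmx (@det_unit_upper _ _ U) ?mul1r // => [i j hij|i]; rewrite mxE.
    rewrite -(inj_eq val_inj) /= (gtn_eqF hij) add0r.
    case: eqVneq => [ei|]; last by rewrite mul0r.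
    by move: hij; rewrite ei.
  by rewrite eqxx; case: eqP => [->|]; rewrite ?mul0r ?addr0.
pose B'' := \matrix_(i < n.+1) (if (i : nat) == 0%N then v 0 else if (i : nat) == 1%N then M
                           else v i.-1 - v 0).
have e3 : \det B' = S * \det B''.
  rewrite (@determinant_multilinear _ _ B' B'' B'' ord0 S 0) ?mul0r ?addr0 //.
    by rewrite !rowK' /= scale0r addr0.
  1-2: by apply/matrixP => i j; rewrite !mxE lift0.
pose G := \matrix_(i < n.+1) (if (i : nat) == 0%N then v 0 else if (i : nat) == 1%N then M
                           else v i.-1).
have e4 : \det B'' = \det G.
  pose T : 'M[R]_n.+1 := \matrix_(i, k) ((i == k)%:R - ((2 <= i)%N && (k == ord0))%:R).
  have -> : B'' = T *m G.
    apply/row_matrixP => i; rewrite row_mulmx_sum.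
    rewrite (eq_bigr (fun k => (i == k)%:R *: row k G -
        ((2 <= i)%N && (k == ord0))%:R *: row k G));
      last by move=> k _; rewrite mxE scalerBl.
    rewrite sumrB (@sum_pick _ _ i); last by move=> k /negPf; rewrite eq_sym => ->.
    rewrite (@sum_pick _ _ ord0); last by move=> k /negPf ->; rewrite andbF.
    rewrite eqxx scale1r andbT !rowK' /=.
    by case: i => [[|[|i]] hi] //=; rewrite ?scale0r ?subr0 // scale1r.
  rewrite det_mulmx (@det_unit_lower _ _ T) ?mul1r // => [i j hij|i]; rewrite mxE.
    by rewrite -(inj_eq val_inj) /= (ltn_eqF hij) -[j == ord0](inj_eq val_inj) /= eqn0Ngt (leq_ltn_trans (leq0n i) hij) andbF subr0.
  by rewrite eqxx; case: eqVneq => [->|_] /=; rewrite ?andbF ?subr0.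
have e5 : G = xrow ord0 o1 (\matrix_(i < n.+1) (if (i : nat) == 0%N then M else v i.-1)).
  apply/matrixP => i j; rewrite /xrow !mxE.
  case: tpermP => [->|->|/eqP h0 /eqP h1]; rewrite ?mxE ?o1E //=.
  case: i h0 h1 => [[|[|k]] hk] //= h0 h1.
  by case/eqP: h1; apply: val_inj; rewrite /= o1E.
rewrite e1 e2 e3 e4 e5 det_xrow; first by ring.
by rewrite -(inj_eq val_inj) /= o1E.
Qed.

End OrientAlg.
Section Geo.
Variables (R : realType) (n m : nat) (K : {set {set 'I_m}}) (o : {set 'I_m} -> bool)
  (ell : {set 'I_m} -> R).
Hypothesis hn : (2 <= n)%N.
Hypothesis hK : oriented_pseudo_manifold n K o.
Hypothesis hnd : forall X : 'M[R]_(m, n.+1), in_Sigma_plus K ell X -> nondegenerate_faces K X.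
Variable F : {set 'I_m}.
Hypothesis hF : F \in K.
Hypothesis hFc : #|F| = n.-1.

Implicit Types (X : 'M[R]_(m, n.+1)) (s : {set 'I_m}) (u v : 'I_m) (c : 'I_m -> R).

Definition comb X (s : {set 'I_m}) (c : 'I_m -> R) : 'rV[R]_n.+1 :=
  \sum_(v in s) c v *: row v X.

Definition gram (u v : 'I_m) : R := if u == v then 1 else cosh_ (ell [set u; v]).

Lemma closedK (s t : {set 'I_m}) : s \in K -> t \subset s -> (0 < #|t|)%N -> t \in K.
Proof. by case: hK => [[_ [hcl _ _ _ _]] _]; exact: hcl. Qed.

Lemma gram_rows X (hX : in_Sigma_plus K ell X) s (hs : s \in K) u v :
  u \in s -> v \in s -> mink (row u X) (row v X) = gram u v.
Proof.
move=> hu hv; rewrite /gram; case: eqVneq => [->|nuv]; first by case: (hX.1 v).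
apply: hX.2 => //; apply: (closedK hs); first by rewrite finset.subUset !finset.sub1set hu hv.
by rewrite cards2 nuv.
Qed.

Lemma cosh_gt0 (x : R) : 0 < cosh_ x.
Proof. by rewrite /cosh_ divr_gt0 // addr_gt0 // expR_gt0. Qed.

Lemma gram_gt0 u v : 0 < gram u v.
Proof. by rewrite /gram; case: eqP => _ //; exact: cosh_gt0. Qed.

Lemma gramC u v : gram u v = gram v u.
Proof. by rewrite /gram eq_sym finset.setUC. Qed.

Lemma mink_combl X s c w : mink (comb X s c) w = \sum_(v in s) c v * mink (row v X) w.
Proof. by rewrite /comb mink_suml; apply: eq_bigr => v _; rewrite minkZl. Qed.

Lemma mink_combr X s c w : mink w (comb X s c) = \sum_(v in s) c v * mink w (row v X).
Proof. by rewrite minkC mink_combl; apply: eq_bigr => v _; rewrite minkC. Qed.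

Lemma combD X s (a b : 'I_m -> R) : comb X s (fun v => a v + b v) = comb X s a + comb X s b.
Proof. by rewrite /comb -big_split; apply: eq_bigr => v _; rewrite scalerDl. Qed.

Lemma combZ X s k (a : 'I_m -> R) : comb X s (fun v => k * a v) = k *: comb X s a.
Proof. by rewrite /comb scaler_sumr; apply: eq_bigr => v _; rewrite scalerA. Qed.

Lemma combB X s (a b : 'I_m -> R) : comb X s (fun v => a v - b v) = comb X s a - comb X s b.
Proof. by rewrite /comb -sumrB; apply: eq_bigr => v _; rewrite scalerBl. Qed.

Lemma comb_delta X s u : u \in s -> comb X s (fun v => (v == u)%:R) = row u X.
Proof.
move=> hu; rewrite /comb (bigD1 u) //= eqxx scale1r big1 ?addr0 //.
by move=> v /andP[_ /negPf ->]; rewrite scale0r.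
Qed.

Lemma comb_ext X s (a b : 'I_m -> R) : (forall v, v \in s -> a v = b v) -> comb X s a = comb X s b.
Proof. by move=> h; apply: eq_bigr => v hv; rewrite h. Qed.

Lemma indep X (hX : in_Sigma_plus K ell X) s (hs : s \in K) c c' :
  comb X s c = comb X s c' -> forall v, v \in s -> c v = c' v.
Proof.
move=> e v hv; apply/eqP; rewrite -subr_eq0; apply/eqP.
apply: (hnd hX hs (c := fun v => c v - c' v)) => //.
by rewrite -/(comb X s _) combB e subrr.
Qed.

Lemma sum_ge_term (s : {set 'I_m}) (f : 'I_m -> R) u :
  (forall v, v \in s -> 0 <= f v) -> u \in s -> f u <= \sum_(v in s) f v.
Proof.
move=> h hu; rewrite (bigD1 u) //= lerDl; apply: sumr_ge0 => v /andP[hv _]; exact: h.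
Qed.

Lemma interiorE X (hX : in_Sigma_plus K ell X) x : interior_point X F x ->
  exists g : 'I_m -> R, [/\ forall v, v \in F -> 0 < g v, x = comb X F g,
                          mink x x = 1 & 0 < \sum_(v in F) g v].
Proof.
case=> b [hb hsum ->]; set y := \sum_(v in F) b v *: row v X.
have hy : y = comb X F b by [].
have [u0 hu0] : exists u0, u0 \in F.
  case: (finset.set_0Vmem F) => [F0|[u0 hu0]]; last by exists u0.
  move: hsum; rewrite F0 big_set0 => /eqP.
  by rewrite eq_sym oner_eq0.
have hq : 0 < mink y y.
  rewrite {1}hy mink_combl.
  have h1 : forall u, u \in F -> b u * b u <= b u * mink (row u X) y.
    move=> u hu; rewrite ler_pM2l ?hb // hy mink_combr.
    have -> : b u = b u * mink (row u X) (row u X) by rewrite (gram_rows hX hF hu hu) /gram eqxx mulr1.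
    apply: (sum_ge_term (f := fun v => b v * mink (row u X) (row v X))) => // v hv.
    by rewrite (gram_rows hX hF hu hv) mulr_ge0 // ?ltW ?hb ?gram_gt0.
  apply: (lt_le_trans _ (sum_ge_term (f := fun u => b u * mink (row u X) y) _ hu0)).
    by apply: (lt_le_trans _ (h1 _ hu0)); rewrite mulr_gt0 ?hb.
  by move=> v hv; apply: le_trans (h1 _ hv); rewrite mulr_ge0 ?ltW ?hb.
set q := mink y y in hq *.
have sq : 0 < Num.sqrt q by rewrite sqrtr_gt0.
exists (fun v => (Num.sqrt q)^-1 * b v); split.
- by move=> v hv; rewrite mulr_gt0 ?invr_gt0 ?hb.
- by rewrite combZ.
- rewrite minkZl minkZr -/q mulrA -expr2 exprVn sqr_sqrtr ?ltW // mulVf //.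
  by rewrite gt_eqF.
- by rewrite -mulr_sumr hsum mulr1 invr_gt0.
Qed.

Lemma facet_split f : is_facet n K f -> F \subset f ->
  exists w, [/\ w \in f, w \notin F & f = w |: F].
Proof.
case/andP=> hfK /eqP hfc hFf.
have : #|f :\: F| = 1%N.
  by rewrite cardsD (finset.setIidPr hFf) hfc hFc; move: hn; lia.
move=> /eqP/cards1P [w hw].
have hwf : w \in f :\: F by rewrite hw finset.set11.
move: (hwf); rewrite inE => /andP[hwF hwf'].
exists w; split => //; apply/setP => u; rewrite finset.in_setU1.
case: (boolP (u \in F)) => huF; first by rewrite orbT (fintype.subsetP hFf).
rewrite orbF; apply/idP/idP => [huf|/eqP -> //].
have : u \in f :\: F by rewrite inE huF huf.
by rewrite hw finset.in_set1.
Qed.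

Section Facet.
Variables (f : {set 'I_m}) (w : 'I_m).
Hypothesis hf : is_facet n K f.
Hypothesis hFf : F \subset f.
Hypothesis hw : w \notin F.
Hypothesis hfw : f = w |: F.

Lemma hfK : f \in K. Proof. by case/andP: hf. Qed.
Lemma hwf : w \in f. Proof. by rewrite hfw finset.setU11. Qed.
Lemma comb_split X c : comb X f c = c w *: row w X + comb X F c.
Proof. by rewrite /comb hfw big_setU1. Qed.

Lemma gram_comb X (hX : in_Sigma_plus K ell X) (a : 'I_m -> R) u : u \in f ->
  mink (comb X f a) (row u X) = \sum_(v in f) a v * gram v u.
Proof.
move=> hu; rewrite mink_combl; apply: eq_bigr => v hv.
by rewrite (gram_rows hX hfK hv hu).
Qed.

Lemma gram_comb2 X (hX : in_Sigma_plus K ell X) (a b : 'I_m -> R) :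
  mink (comb X f a) (comb X f b) = \sum_(u in f) b u * \sum_(v in f) a v * gram v u.
Proof.
rewrite mink_combr; apply: eq_bigr => u hu; by rewrite gram_comb.
Qed.

Definition NormalC X c :=
  [/\ forall u, u \in F -> mink (comb X f c) (row u X) = 0,
      mink (comb X f c) (comb X f c) = -1 & 0 < c w].

Lemma inward_normalE X (hX : in_Sigma_plus K ell X) x nv :
  interior_point X F x -> inward_normal X F f x nv ->
  exists c, nv = comb X f c /\ NormalC X c.
Proof.
move=> hx [[c hc] hnx horth hnn [eps heps hcone]].
have [g [hg hxg hxx hS]] := interiorE hX hx.
have {}hc : nv = comb X f c by [].
exists c; split => //.
have hnF : forall u, u \in F -> mink nv (row u X) = 0.
  move=> u hu; set mu := mink (row u X) x.
  have hsp : span_of X F (row u X - mu *: x).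
    exists (fun v => (v == u)%:R - mu * g v).
    by rewrite -/(comb X F _) combB combZ comb_delta // -hxg.
  have := horth _ hsp; rewrite minkBl minkZl hxx mulr1 subrr => /(_ erefl).
  by rewrite minkBr minkZr hnx mulr0 subr0.
rewrite /NormalC -hc; split => //.
pose g0 v := if v \in F then g v else 0.
have hg0 : comb X f g0 = x.
  rewrite comb_split /g0 (negPf hw) scale0r add0r hxg.
  by apply: comb_ext => v ->.
have hcw : 0 <= c w.
  have ht : 0 < eps / 2 by rewrite divr_gt0.
  have ht2 : eps / 2 < eps by rewrite ltr_pdivrMr // ltr_pMr // ltr1n.
  have [e [he hxe]] := hcone _ ht ht2.
  have : comb X f (fun v => g0 v + eps / 2 * c v) = comb X f e.
    by rewrite combD combZ hg0 -hc.
  move/(indep hX hfK)/(_ _ hwf); rewrite /g0 (negPf hw) add0r => hew.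
  have := he w; rewrite -hew pmulr_rge0 //.
rewrite lt_neqAle hcw andbT; apply/eqP => hc0.
have hN : nv = comb X F c by rewrite hc comb_split -hc0 scale0r add0r.
move: hnn; rewrite {2}hN mink_combr big1 => [|v hv].
  by move/eqP; rewrite eq_sym oppr_eq0 oner_eq0.
by rewrite hnF // mulr0.
Qed.

Lemma normal_unique X X' (hX : in_Sigma_plus K ell X) (hX' : in_Sigma_plus K ell X') x
  (hx : interior_point X F x) c c' :
  NormalC X c -> NormalC X' c' -> forall v, v \in f -> c v = c' v.
Proof.
case=> hc1 hc2 hc3 [hd1 hd2 hd3].
have [g [hg hxg hxx hS]] := interiorE hX hx.
set N := comb X f c; set N' := comb X f c'.
have hN'F : forall u, u \in F -> mink N' (row u X) = 0.
  move=> u hu; have huf : u \in f := fintype.subsetP hFf u hu.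
  by rewrite /N' (gram_comb hX) // -(gram_comb hX') //; exact: hd1.
have hN'N' : mink N' N' = -1 by rewrite /N' (gram_comb2 hX) -(gram_comb2 hX') hd2.
set k := c' w / c w.
have hk : 0 < k by rewrite divr_gt0.
set z := N' - k *: N.
have hz : z = comb X F (fun v => c' v - k * c v).
  rewrite /z /N /N' -combZ -combB comb_split.
  by rewrite /k divfK ?gt_eqF // subrr scale0r add0r.
have hzF : forall u, u \in F -> mink z (row u X) = 0.
  by move=> u hu; rewrite /z minkBl minkZl hN'F // hc1 // mulr0 subrr.
have hzz : mink z z = 0.
  by rewrite {2}hz mink_combr big1 // => v hv; rewrite hzF // mulr0.
have hzx : mink z x = 0.
  by rewrite hxg mink_combr big1 // => v hv; rewrite hzF // mulr0.
have z0 := timelike0 hxx hzx hzz.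
have eN : N' = k *: N by apply/eqP; rewrite -subr_eq0 -/z z0.
have k1 : k = 1.
  move: hN'N'; rewrite eN minkZl minkZr hc2 => e; nra.
move=> v hv; apply: (indep hX hfK) => //.
by rewrite -/N -/N' eN k1 scale1r.
Qed.

End Facet.


Section Om.
Implicit Types (a b : 'rV[R]_n.+1).

Definition FL X := [seq row v X | v <- enum F].
Definition om X (a b : 'rV[R]_n.+1) := \det (mat (a :: b :: FL X)).

Lemma size_FL X : size (FL X) = n.-1.
Proof. by rewrite size_map -cardE hFc. Qed.

Lemma om_linr X a (b1 b2 : 'rV[R]_n.+1) (s t : R) :
  om X a (s *: b1 + t *: b2) = s * om X a b1 + t * om X a b2.
Proof. by apply: (@mat_multilinear R n [:: a] (FL X)); rewrite /=; lia. Qed.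

Lemma om_linl X (a1 a2 : 'rV[R]_n.+1) b (s t : R) :
  om X (s *: a1 + t *: a2) b = s * om X a1 b + t * om X a2 b.
Proof. exact: (@mat_multilinear R n [::] (b :: FL X)). Qed.

Lemma om_r0 X a : om X a 0 = 0.
Proof. by have := om_linr X a 0 0 0 0; rewrite !scale0r addr0 !mul0r addr0. Qed.

Lemma om_rZ X a b (k : R) : om X a (k *: b) = k * om X a b.
Proof. by have := om_linr X a b 0 k 0; rewrite !scale0r !addr0 om_r0 mulr0 addr0. Qed.

Lemma om_lZ X a b (k : R) : om X (k *: a) b = k * om X a b.
Proof. by have := om_linl X a 0 b k 0; rewrite !scale0r !addr0 mul0r addr0. Qed.

Lemma om_rD X a b1 b2 : om X a (b1 + b2) = om X a b1 + om X a b2.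
Proof. by have := om_linr X a b1 b2 1 1; rewrite !scale1r !mul1r. Qed.

Lemma om_lD X a1 a2 b : om X (a1 + a2) b = om X a1 b + om X a2 b.
Proof. by have := om_linl X a1 a2 b 1 1; rewrite !scale1r !mul1r. Qed.

Lemma om_rB X a b1 b2 : om X a (b1 - b2) = om X a b1 - om X a b2.
Proof. by rewrite om_rD -scaleN1r om_rZ mulN1r. Qed.

Lemma om_sumr X a (I : Type) (r : seq I) (P : pred I) (G : I -> 'rV[R]_n.+1) :
  om X a (\sum_(i <- r | P i) G i) = \sum_(i <- r | P i) om X a (G i).
Proof.
elim: r => [|x r IH]; first by rewrite !big_nil om_r0.
by rewrite !big_cons; case: (P x); rewrite ?om_rD IH.
Qed.

Lemma om_aa X a : om X a a = 0.
Proof. by apply: (@mat_alternate R n _ 0 1) => //; lia. Qed.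

Lemma om_anti X a b : om X b a = - om X a b.
Proof.
have := om_aa X (a + b); rewrite om_lD !om_rD !om_aa add0r addr0 => /eqP.
by rewrite addr_eq0 => /eqP ->; rewrite opprK.
Qed.

Lemma om_row X a u : u \in F -> om X a (row u X) = 0.
Proof.
move=> hu; have hi : (index u (enum F) < n.-1)%N by rewrite -hFc cardE index_mem mem_enum.
apply: (@mat_alternate R n _ 1 (index u (enum F)).+2) => //; try lia.
by rewrite /= /FL (nth_map u) ?nth_index ?mem_enum // -cardE hFc.
Qed.

Lemma om_combF X a e : om X a (comb X F e) = 0.
Proof. by rewrite om_sumr big1 // => v hv; rewrite om_rZ om_row // mulr0. Qed.

Definition ltI (u v : 'I_m) := (u < v)%N.

Lemma ltI_trans : transitive ltI.
Proof. by move=> a b c; exact: ltn_trans. Qed.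

Lemma enum_filter (A : {set 'I_m}) : enum A = [seq x <- enum 'I_m | x \in A].
Proof.
rewrite -(deprecated_filter_index_enum predT) filter_predT.
rewrite -(deprecated_filter_index_enum (fun x => x \in A)).
by apply: eq_enum.
Qed.

Lemma sorted_enumI (A : {set 'I_m}) : sorted ltI (enum A).
Proof.
rewrite enum_filter; apply: sorted_filter; first exact: ltI_trans.
have -> : sorted ltI (enum 'I_m) = sorted ltn (map val (enum 'I_m)) by rewrite sorted_map.
by rewrite val_enum_ord iota_ltn_sorted.
Qed.

Lemma pairwise_enumI (A : {set 'I_m}) : pairwise ltI (enum A).
Proof. by rewrite -sorted_pairwise ?sorted_enumI //; exact: ltI_trans. Qed.

Section Facet2.
Variables (f : {set 'I_m}) (w : 'I_m).
Hypothesis hf : is_facet n K f.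
Hypothesis hFf : F \subset f.
Hypothesis hw : w \notin F.
Hypothesis hfw : f = w |: F.

Let L1 := [seq u <- enum F | ltI u w].
Let L2 := [seq u <- enum F | ltI w u].

Lemma enumF_split : enum F = L1 ++ L2.
Proof.
apply: (irr_sorted_eq ltI_trans); first by move=> u; exact: ltnn.
- exact: sorted_enumI.
- rewrite sorted_pairwise; last exact: ltI_trans.
  rewrite pairwise_cat (pairwise_filter _ (pairwise_enumI F)) (pairwise_filter _ (pairwise_enumI F)) ?andbT.
  apply/allrelP => a b; rewrite !mem_filter => /andP[ha _] /andP[hb _].
  exact: ltn_trans ha hb.
- move=> u; rewrite mem_enum mem_cat /L1 /L2 (mem_filter (fun u0 => ltI u0 w)) (mem_filter (fun u0 => ltI w u0)) !mem_enum.
  case: (boolP (u \in F)) => hu; rewrite ?andbF //= !andbT.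
  have : u != w by apply: contraNneq hw => <-.
  rewrite -(inj_eq val_inj) /ltI; case: ltngtP => //.
Qed.

Lemma enumf_split : enum f = L1 ++ w :: L2.
Proof.
apply: (irr_sorted_eq ltI_trans); first by move=> u; exact: ltnn.
- exact: sorted_enumI.
- rewrite sorted_pairwise; last exact: ltI_trans.
  rewrite pairwise_cat /= (pairwise_filter _ (pairwise_enumI F)) (pairwise_filter _ (pairwise_enumI F)) ?andbT.
  apply/andP; split; last by apply/allP => u; rewrite mem_filter => /andP[].
  apply/allrelP => a b; rewrite mem_filter inE => /andP[ha _].
  case/orP => [/eqP ->//|]; rewrite mem_filter => /andP[hb _].
  exact: ltn_trans ha hb.
- move=> u; rewrite mem_enum hfw finset.in_setU1 mem_cat inE /L1 /L2 (mem_filter (fun u0 => ltI u0 w)) (mem_filter (fun u0 => ltI w u0)) !mem_enum.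
  case: (eqVneq u w) => [->|nuw] /=; first by rewrite /ltI ltnn.
  case: (boolP (u \in F)) => hu; rewrite ?andbF //= !andbT.
  move: nuw; rewrite -(inj_eq val_inj) /ltI; case: ltngtP => //.
Qed.

Definition pos := #|[set u in F | (u < w)%N]|.

Lemma size_L1 : size L1 = pos.
Proof.
rewrite /pos cardE enum_filter /L1 enum_filter -filter_predI.
by congr size; apply: eq_filter => u; rewrite !inE andbC.
Qed.

Lemma om_insert X (M : 'rV[R]_n.+1) :
  \det (mat (M :: [seq row v X | v <- enum f])) = (-1) ^+ pos * om X M (row w X).
Proof.
rewrite enumf_split map_cat /= mat_insert; last first.
  have := size_FL X; rewrite /FL enumF_split map_cat size_cat !size_map => e.
  by rewrite ?size_map; move: hn e; lia.
by rewrite ?size_map size_L1 /om /FL enumF_split map_cat.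
Qed.

Lemma om_combf X (a : 'rV[R]_n.+1) c : om X a (comb X f c) = c w * om X a (row w X).
Proof. by rewrite (comb_split hw hfw) om_rD om_combF addr0 om_rZ. Qed.

Lemma size_enumf : size (enum f) = n.
Proof. by rewrite -cardE; case/andP: hf => _ /eqP. Qed.

Lemma sum_enumf (V : zmodType) (h : 'I_m -> V) :
  \sum_(v in f) h v = \sum_(j < n) h (nth w (enum f) j).
Proof. by rewrite -big_enum (big_nth w) size_enumf big_mkord. Qed.

Lemma fvertE X j : (j < n)%N -> fvert X f j = row (nth w (enum f) j) X.
Proof. by move=> hj; rewrite /fvert (nth_map w) // size_enumf. Qed.

Lemma orient_sign X (hX : in_Sigma_plus K ell X) x (hx : interior_point X F x) M c :
  oriented_normal X o f x M -> 0 < c w ->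
  (-1) ^+ (o f + pos) * om X M (comb X f c) < 0.
Proof.
case=> _ _ _ hdet hcw.
have [g [hg hxg hxx hS]] := interiorE hX hx.
pose g0 v := if v \in F then g v else 0.
pose d (j : nat) := g0 (nth w (enum f) j).
have hx' : x = \sum_(j < n) d j *: fvert X f j.
  have -> : x = comb X f g0.
    rewrite (comb_split hw hfw) /g0 (negPf hw) scale0r add0r hxg.
    by apply: comb_ext => v ->.
  rewrite /comb (sum_enumf (fun v => g0 v *: row v X)).
  by apply: eq_bigr => j _; rewrite fvertE.
have hS' : \sum_(j < n) d j = \sum_(v in F) g v.
  rewrite -(sum_enumf g0) hfw big_setU1 //= /g0 (negPf hw) add0r.
  by apply: eq_bigr => v ->.
have hn0 : (0 < n)%N by apply: leq_trans hn.
move: hdet; rewrite /orient_frame (orient_det hn0 M hx') hS'.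
have -> : \matrix_(i < n.+1) (if (i : nat) == 0%N then M else fvert X f i.-1) =
          mat (M :: [seq row v X | v <- enum f]).
  by apply/matrixP => i j; rewrite !mxE; case: i => [[|k] hk] //=.
rewrite om_insert om_combf exprD.
set s : R := (-1) ^+ (o f); set t : R := (-1) ^+ pos; set D := om X M (row w X).
move=> hdet.
have hY : s * t * D < 0.
  have : 0 < - ((\sum_(v in F) g v) * (s * t * D)) by move: hdet; congr (0 < _); ring.
  by rewrite oppr_gt0 pmulr_rlt0.
rewrite (_ : s * t * (c w * D) = c w * (s * t * D)); last by ring.
by rewrite pmulr_rlt0.
Qed.

End Facet2.

Definition OrthoPair X (a b : 'rV[R]_n.+1) :=
  [/\ forall u, u \in F -> mink a (row u X) = 0,
      forall u, u \in F -> mink b (row u X) = 0,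
      mink a a = -1, mink b b = -1 & mink a b = 0].

Lemma om_sq X X' (hX : in_Sigma_plus K ell X) (hX' : in_Sigma_plus K ell X') a b a' b' :
  OrthoPair X a b -> OrthoPair X' a' b' -> om X a b ^+ 2 = om X' a' b' ^+ 2.
Proof.
have [u0 hu0] : exists u0, u0 \in F.
  have : (0 < #|F|)%N by rewrite hFc; move: hn; lia.
  by case/card_gt0P => u0 hu0; exists u0.
pose E (i j : nat) : R := if ((i < 2) || (j < 2))%N then (if i == j then -1 else 0)
  else gram (nth u0 (enum F) (i - 2)) (nth u0 (enum F) (j - 2)).
have key : forall Y (p q : 'rV[R]_n.+1), in_Sigma_plus K ell Y -> OrthoPair Y p q ->
    (mat (p :: q :: FL Y)) *m Eta R n *m (mat (p :: q :: FL Y))^T = \matrix_(i, j) E i j.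
  move=> Y p q hY [hp hq hpp hqq hpq]; apply/matrixP => i j; rewrite GramE !row_mat !mxE /E.
  have hnth : forall k, (k < n.-1)%N -> nth 0 (FL Y) k = row (nth u0 (enum F) k) Y.
    by move=> k hk; rewrite /FL (nth_map u0) // -cardE hFc.
  have hmem : forall k, (k < n.-1)%N -> nth u0 (enum F) k \in F.
    by move=> k hk; rewrite -mem_enum mem_nth // -cardE hFc.
  case: i j => [[|[|k]] hk] [[|[|l]] hl] /=.
  - exact: hpp.
  - exact: hpq.
  - by rewrite hnth ?hp ?hmem //; lia.
  - by rewrite minkC hpq.
  - exact: hqq.
  - by rewrite hnth ?hq ?hmem //; lia.
  - by rewrite minkC hnth ?hp ?hmem //; lia.
  - by rewrite minkC hnth ?hq ?hmem //; lia.
  - rewrite !subSS !subn0 !hnth; try lia.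
    by rewrite (gram_rows hY hF) ?hmem //; lia.
move=> h h'; have e1 := key _ _ _ hX h; have e2 := key _ _ _ hX' h'.
have := congr1 determinant (etrans e1 (esym e2)).
rewrite !det_Gram => /mulIf; apply; exact: det_Eta_neq0.
Qed.

Lemma orthopair_of f w X (hX : in_Sigma_plus K ell X) x (hx : interior_point X F x) M c :
  is_facet n K f -> F \subset f -> w \notin F -> f = w |: F ->
  oriented_normal X o f x M -> NormalC f w X c -> OrthoPair X M (comb X f c).
Proof.
move=> hf hFf hw hfw [hMx hMorth hMM _] [hc1 hc2 hc3].
have [g [hg hxg hxx hS]] := interiorE hX hx.
pose g0 v := if v \in F then g v else 0.
have hg0 : comb X f g0 = x.
  rewrite (comb_split hw hfw) /g0 (negPf hw) scale0r add0r hxg.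
  by apply: comb_ext => v ->.
have hNx : mink (comb X f c) x = 0.
  by rewrite hxg mink_combr big1 // => v hv; rewrite hc1 // mulr0.
have hMF : forall u, u \in F -> mink M (row u X) = 0.
  move=> u hu; set mu := mink (row u X) x.
  have huf : u \in f := fintype.subsetP hFf u hu.
  have hsp : span_of X f (row u X - mu *: x).
    exists (fun v => (v == u)%:R - mu * g0 v).
    by rewrite -/(comb X f _) combB combZ comb_delta // hg0.
  have := hMorth _ hsp; rewrite minkBl minkZl hxx mulr1 subrr => /(_ erefl).
  by rewrite minkBr minkZr hMx mulr0 subr0.
split => //.
apply: hMorth => //; by exists c.
Qed.

Lemma angle_cos X (N1 N2 M1 : 'rV[R]_n.+1) (al : R) :
  OrthoPair X M1 N1 -> N2 = cos al *: N1 - sin al *: M1 ->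
  cos al = - mink N1 N2.
Proof.
case=> _ _ _ h11 hmn ->.
by rewrite minkBr !minkZr h11 minkC hmn; ring.
Qed.

Lemma angle_sin X (N1 N2 M1 : 'rV[R]_n.+1) (al : R) :
  N2 = cos al *: N1 - sin al *: M1 ->
  om X N1 N2 = sin al * om X M1 N1.
Proof.
move=> ->; rewrite om_rB !om_rZ om_aa (om_anti X M1 N1); ring.
Qed.

Lemma sign_eq (a b s : R) : a ^+ 2 = b ^+ 2 -> s * a < 0 -> s * b < 0 -> a = b.
Proof.
move=> /eqP; rewrite eqf_sqr => /orP[/eqP //|/eqP ->] h1 h2.
by move: h1; rewrite mulrN oppr_lt0 => h1; have := lt_trans h2 h1; rewrite ltxx.
Qed.

Lemma pf_comb s c j : PolyFun (fun X : 'M[R]_(m, n.+1) => (comb X s c) 0 j).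
Proof.
apply: pf_ext (pf_sum _ _ (fun v => pf_mul (pf_const _ _ (c v)) (pf_coord _ v j))) _ => X.
by rewrite /comb summxE; apply: eq_bigr => v _; rewrite !mxE.
Qed.

Lemma pf_mink (p q : 'M[R]_(m, n.+1) -> 'rV[R]_n.+1) :
  (forall j, PolyFun (fun X => p X 0 j)) -> (forall j, PolyFun (fun X => q X 0 j)) ->
  PolyFun (fun X => mink (p X) (q X)).
Proof.
move=> hp hq; rewrite /mink.
apply: pf_add; first exact: pf_mul.
apply: pf_opp; apply: pf_sum => j; exact: pf_mul.
Qed.

Lemma pf_om (p q : 'M[R]_(m, n.+1) -> 'rV[R]_n.+1) :
  (forall j, PolyFun (fun X => p X 0 j)) -> (forall j, PolyFun (fun X => q X 0 j)) ->
  PolyFun (fun X => om X (p X) (q X)).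
Proof.
move=> hp hq; have [u0 hu0] : exists u0, u0 \in F.
  have : (0 < #|F|)%N by rewrite hFc; move: hn; lia.
  by case/card_gt0P => u0 hu0; exists u0.
apply: pf_det => i j.
apply: pf_ext (_ : PolyFun (fun X => (nth 0 (p X :: q X :: FL X) i) 0 j)) _; last first.
  by move=> X; rewrite mxE.
case: i => [[|[|k]] hk] /=; [exact: hp | exact: hq|].
case: (ltnP k (size (enum F))) => hks.
  apply: pf_ext (pf_coord _ (nth u0 (enum F) k) j) _ => X.
  by rewrite /FL (nth_map u0) // mxE.
apply: pf_ext (pf_const _ _ 0) _ => X.
by rewrite /FL nth_default ?size_map // mxE.
Qed.

Lemma cplx (a b : R) : Complex a b = real_complex R a + Complex 0 1 * real_complex R b.
Proof. by rewrite /= /real_complex_def; simpc. Qed.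

Lemma sign_odd (A B : nat) : odd (A + B) -> (-1) ^+ A = - (-1) ^+ B :> R.
Proof.
move=> hodd.
have e : (-1) ^+ (A + B) = -1 :> R by rewrite -signr_odd hodd expr1.
have eB : (-1) ^+ B * (-1) ^+ B = 1 :> R.
  by rewrite -exprD -signr_odd addnn odd_double expr0.
have -> : (-1) ^+ A = (-1) ^+ A * ((-1) ^+ B * (-1) ^+ B) :> R by rewrite eB mulr1.
by rewrite mulrA -exprD e mulN1r.
Qed.

Lemma two_facets g1 g2 f : is_facet n K g1 -> is_facet n K g2 -> g1 != g2 ->
  F \subset g1 -> F \subset g2 -> is_facet n K f -> F \subset f -> f = g1 \/ f = g2.
Proof.
move=> hg1 hg2 hne hF1 hF2 hf hFf.
case: hK => [[_ [_ _ _ htwo _]] _].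
have hS := htwo F hF hFc.
set S := [set f0 | is_facet n K f0 && (F \subset f0)] in hS.
have sub : [set g1; g2] \subset S by rewrite finset.subUset !finset.sub1set !inE hg1 hg2 hF1 hF2.
have eS : [set g1; g2] = S.
  by apply/eqP; rewrite eqEcard sub hS cards2 hne.
have : f \in S by rewrite inE hf hFf.
by rewrite -eS => /finset.set2P.
Qed.

Lemma main_geo :
  exists Q : mpoly.mpoly (m * n.+1) R[i],
    forall X : 'M[R]_(m, n.+1), in_Sigma_plus K ell X ->
    forall f1 f2 : {set 'I_m},
      is_facet n K f1 -> is_facet n K f2 -> f1 != f2 ->
      F \subset f1 -> F \subset f2 ->
    forall (x : 'rV[R]_n.+1) (alpha : R),
      interior_point X F x ->
      is_oriented_dihedral_angle X o F f1 f2 x alpha ->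
      mpoly.meval (coords X) Q = Complex (cos alpha) (sin alpha).
Proof.
case: (pselect (exists (X0 : 'M[R]_(m, n.+1)) (g1 g2 : {set 'I_m}) (x0 : 'rV[R]_n.+1) (a0 : R),
   [/\ in_Sigma_plus K ell X0, is_facet n K g1 /\ is_facet n K g2, g1 != g2,
       F \subset g1 /\ F \subset g2 &
       interior_point X0 F x0 /\ is_oriented_dihedral_angle X0 o F g1 g2 x0 a0]))
  => [[X0 [g1 [g2 [x0 [a0 [hX0 [hg1 hg2] hg12 [hFg1 hFg2] [hx0 hang0]]]]]]]|Hno]; last first.
  exists 0 => X hX f1 f2 hf1 hf2 hne hF1 hF2 x al hx hang; exfalso; apply: Hno.
  by exists X, f1, f2, x, al; split.
have [w1 [hw1f hw1 hg1w]] := facet_split hg1 hFg1.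
have [w2 [hw2f hw2 hg2w]] := facet_split hg2 hFg2.
case: hang0 => n1 [n2 [m1 [hin1 hin2 hon1 hrel0]]].
have [c [hn1 hc]] := inward_normalE hg1 hw1 hg1w hX0 hx0 hin1.
have [d [hn2 hd]] := inward_normalE hg2 hw2 hg2w hX0 hx0 hin2.
set kap := om X0 m1 n1.
have hop1 := orthopair_of hX0 hx0 hg1 hFg1 hw1 hg1w hon1 hc.
have hsg1 : (-1) ^+ (o g1 + pos w1) * kap < 0.
  rewrite /kap hn1; apply: (orient_sign hg1 hFg1 hw1 hg1w hX0 hx0 hon1).
  by case: hc.
have hkap0 : kap != 0 by apply: contraTneq hsg1 => ->; rewrite mulr0 ltxx.
have hodd : odd ((o g1 + pos w1) + (o g2 + pos w2)).
  case: hK => _ hor; rewrite addnA.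
  apply: (hor F g1 g2 w1 w2) => //; by rewrite inE ?hw1 ?hw2 ?hw1f ?hw2f.
have [qc hqc] : PolyFun (fun X => - mink (comb X g1 c) (comb X g2 d)).
  by apply: pf_opp; apply: pf_mink => j; exact: pf_comb.
have [qs hqs] : PolyFun (fun X => om X (comb X g1 c) (comb X g2 d) * kap^-1).
  apply: pf_mul; last exact: pf_const.
  by apply: pf_om => j; exact: pf_comb.
exists (qc + mpoly.mpolyC _ (Complex 0 1) * qs) => X hX f1 f2 hf1 hf2 hne hF1 hF2 x al hx hang.
rewrite mpoly.mevalD mpoly.mevalM mpoly.mevalC hqc hqs cplx.
suff [-> ->] : - mink (comb X g1 c) (comb X g2 d) = cos al /\
               om X (comb X g1 c) (comb X g2 d) * kap^-1 = sin al by [].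
case: hang => N1 [N2 [M1 [hiN1 hiN2 hoM1 hrel]]].
case: (two_facets hg1 hg2 hg12 hFg1 hFg2 hf1 hF1) => ef1.
- have ef2 : f2 = g2.
    case: (two_facets hg1 hg2 hg12 hFg1 hFg2 hf2 hF2) => // ef2.
    by move: hne; rewrite ef1 ef2 eqxx.
  move: hiN1 hiN2 hoM1; rewrite ef1 ef2 => hiN1 hiN2 hoM1.
  have [c1 [hN1 hc1]] := inward_normalE hg1 hw1 hg1w hX hx hiN1.
  have [d1 [hN2 hd1]] := inward_normalE hg2 hw2 hg2w hX hx hiN2.
  have eN1 : N1 = comb X g1 c.
    by rewrite hN1; apply: comb_ext => v hv; exact: (normal_unique hg1 hFg1 hw1 hg1w hX hX0 hx hc1 hc hv).
  have eN2 : N2 = comb X g2 d.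
    by rewrite hN2; apply: comb_ext => v hv; exact: (normal_unique hg2 hFg2 hw2 hg2w hX hX0 hx hd1 hd hv).
  have hopX := orthopair_of hX hx hg1 hFg1 hw1 hg1w hoM1 hc1.
  rewrite -hN1 in hopX.
  rewrite -eN1 -eN2; split; first by rewrite (angle_cos hopX hrel).
  have ek : om X M1 N1 = kap.
    apply: (sign_eq (om_sq hX hX0 hopX _)); last exact: hsg1.
      by rewrite -hn1 in hop1.
    rewrite hN1; apply: (orient_sign hg1 hFg1 hw1 hg1w hX hx hoM1).
    by case: hc1.
  by rewrite (angle_sin X hrel) ek mulfK.
- have ef2 : f2 = g1.
    case: (two_facets hg1 hg2 hg12 hFg1 hFg2 hf2 hF2) => // ef2.
    by move: hne; rewrite ef1 ef2 eqxx.
  move: hiN1 hiN2 hoM1; rewrite ef1 ef2 => hiN1 hiN2 hoM1.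
  have [c1 [hN1 hc1]] := inward_normalE hg2 hw2 hg2w hX hx hiN1.
  have [d1 [hN2 hd1]] := inward_normalE hg1 hw1 hg1w hX hx hiN2.
  have eN1 : N1 = comb X g2 d.
    by rewrite hN1; apply: comb_ext => v hv; exact: (normal_unique hg2 hFg2 hw2 hg2w hX hX0 hx hc1 hd hv).
  have eN2 : N2 = comb X g1 c.
    by rewrite hN2; apply: comb_ext => v hv; exact: (normal_unique hg1 hFg1 hw1 hg1w hX hX0 hx hd1 hc hv).
  have hopX := orthopair_of hX hx hg2 hFg2 hw2 hg2w hoM1 hc1.
  rewrite -hN1 in hopX.
  rewrite -eN1 -eN2; split; first by rewrite minkC (angle_cos hopX hrel).
  have ek : om X M1 N1 = - kap.
    apply: (sign_eq (a := om X M1 N1) (b := - kap) (s := (-1) ^+ (o g2 + pos w2))).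
    - by rewrite sqrrN; apply: (om_sq hX hX0 hopX); rewrite -hn1 in hop1.
    - rewrite hN1; apply: (orient_sign hg2 hFg2 hw2 hg2w hX hx hoM1).
      by case: hc1.
    - by move: hsg1; rewrite (sign_odd hodd) mulrN mulNr.
  rewrite om_anti (angle_sin X hrel) ek.
  by rewrite mulrN opprK mulfK.
Qed.

End Om.

End Geo.

Unset Implicit Arguments.

Theorem lemma24 (R : realType) (n m : nat) (K : {set {set 'I_m}})
    (o : {set 'I_m} -> bool) (ell : {set 'I_m} -> R) :
  (2 <= n)%N ->
  oriented_pseudo_manifold n K o ->
  (forall e, e \in K -> #|e| = 2%N -> 0 < ell e) ->
  (forall X : 'M[R]_(m, n.+1), in_Sigma_plus K ell X -> nondegenerate_faces K X) ->
  forall F : {set 'I_m}, F \in K -> #|F| = n.-1 ->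
  exists Q : mpoly.mpoly (m * n.+1) R[i],
    forall X : 'M[R]_(m, n.+1), in_Sigma_plus K ell X ->
    forall f1 f2 : {set 'I_m},
      is_facet n K f1 -> is_facet n K f2 -> f1 != f2 ->
      F \subset f1 -> F \subset f2 ->
    forall (x : 'rV[R]_n.+1) (alpha : R),
      interior_point X F x ->
      is_oriented_dihedral_angle X o F f1 f2 x alpha ->
      mpoly.meval (coords X) Q = Complex (cos alpha) (sin alpha).
Proof.
move=> hn hK _ hnd F hF hFc.
exact: (main_geo hn hK hnd hF hFc).
Qed.
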